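(* Let $G$ be a finite $p$-group, $k$ a field of characteristic $p$, and $I$ a non-zero proper ideal of $kG$. Then $I$, as a $kG$-module, is indecomposable and projective-free. In particular, every non-zero power $J^i(kG)$ of the Jacobson radical $J(kG)$ is an indecomposable projective-free $kG$-module.
   Context: A $kG$-module is projective-free if it has no non-zero projective direct summand (submodule). $J(kG)$ denotes the Jacobson radical of $kG$. *)

(* Defs.v *)
From HB Require Import structures.
From mathcomp Require Import all_boot all_order all_fingroup all_solvable all_algebra.
From mathcomp Require Import pgroup mxrepresentation.
Set Implicit Arguments. Unset Strict Implicit. Unset Printing Implicit Defensive.
Import GRing.Theory.
Local Open Scope ring_scope.

(* The group algebra kG is modelled, as in mathcomp's mxrepresentation, by row
   vectors 'rV[F]_#|G| (coordinates w.r.t. the basis G), acted upon on the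
   right by the regular representation [regular_repr F G].  The element v
   corresponds to the matrix [gring_mx (regular_repr F G) v], and the product
   of v and w in kG is v *m gring_mx aG w (= gring_row (gring_mx v *m gring_mx w)). *)

Section GroupAlgebra.
Variables (F : fieldType) (gT : finGroupType) (G : {group gT}).
Local Notation aG := (regular_repr F G).
Local Notation nG := (gcard G).

Definition gring_mul (v w : 'rV[F]_nG) : 'rV[F]_nG := v *m gring_mx aG w.

Definition gring_ideal (U : 'M[F]_nG) : Prop :=
  forall v w : 'rV[F]_nG, (v <= U)%MS ->
    (gring_mul v w <= U)%MS /\ (gring_mul w v <= U)%MS.

Definition in_gring_rad (v : 'rV[F]_nG) : Prop :=
  forall n (rS : mx_representation F G n), mx_irreducible rS -> gring_mx rS v = 0.

Fixpoint in_gring_rad_pow (i : nat) (v : 'rV[F]_nG) : Prop :=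
  match i with
  | 0 => True
  | i'.+1 => exists m (a b : 'I_m -> 'rV[F]_nG),
      (forall k, in_gring_rad_pow i' (a k) /\ in_gring_rad (b k)) /\
      v = \sum_(k < m) gring_mul (a k) (b k)
  end.

Definition mx_intertwines m n (rM : mx_representation F G m)
    (rN : mx_representation F G n) (f : 'M[F]_(m, n)) : Prop :=
  forall x, x \in G -> rM x *m f = f *m rN x.

Definition mx_projective d (rP : mx_representation F G d) : Prop :=
  forall m n (rM : mx_representation F G m) (rN : mx_representation F G n)
    (pi : 'M[F]_(m, n)) (f : 'M[F]_(d, n)),
    mx_intertwines rM rN pi -> row_full pi -> mx_intertwines rP rN f ->
    exists2 h : 'M[F]_(d, m), mx_intertwines rP rM h & h *m pi = f.

Definition mx_indecomposable n (rM : mx_representation F G n) : Prop :=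
  (0 < n)%N /\
  forall V W : 'M[F]_n, mxmodule rM V -> mxmodule rM W ->
    (V + W == 1%:M)%MS -> mxdirect (V + W) -> (V == 0) || (W == 0).

Definition mx_projective_free n (rM : mx_representation F G n) : Prop :=
  forall (V W : 'M[F]_n) (modV : mxmodule rM V), mxmodule rM W ->
    (V + W == 1%:M)%MS -> mxdirect (V + W) ->
    mx_projective (submod_repr modV) -> V == 0.

End GroupAlgebra.

(* Main.v *)
Require Import Defs.
From HB Require Import structures.
From mathcomp Require Import all_boot all_order all_fingroup all_solvable all_algebra.
From mathcomp Require Import pgroup mxrepresentation mxabelem.
Import GRing.Theory.
Local Open Scope ring_scope.

Section Aux.
Variables (F : fieldType) (gT : finGroupType) (G : {group gT}) (p : nat).
Hypothesis pG : (p.-group G)%g.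
Hypothesis pF : p \in [pchar F].

Section Dual.
Variables (n : nat) (rM : mx_representation F G n).
Definition dual_mx (x : gT) := (rM (x^-1)%g)^T.
Lemma dual_mx_repr : mx_repr G dual_mx.
Proof.
split=> [|x y Gx Gy]; rewrite /dual_mx.
  by rewrite invg1 repr_mx1 trmx1.
by rewrite invMg repr_mxM ?groupV // trmx_mul.
Qed.
Definition dual_repr := MxRepresentation dual_mx_repr.
End Dual.
Arguments dual_repr {n}.
Arguments dual_mx {n}.

Lemma dual_fix {n} (rM : mx_representation F G n) : (0 < n)%N ->
  exists2 c : 'cV_n, c != 0 & forall x, x \in G -> rM x *m c = c.
Proof.
move=> n0; have := rfix_pgroup_pchar pF (dual_repr rM) n0 pG (subxx G).
case/rowV0Pn=> r /rfix_mxP rf nz; exists r^T; first by rewrite trmx_eq0.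
move=> x Gx; have := rf _ (groupVr Gx); rewrite /= /dual_mx invgK => e.
by rewrite -{2}e trmx_mul trmxK.
Qed.

Lemma dual_fix_quot n (rM : mx_representation F G n) (M : 'M_n)
  (modM : mxmodule rM M) : ~~ row_full M ->
  exists c : 'cV_n, [/\ c != 0, M *m c = 0 & forall x, x \in G -> rM x *m c = c].
Proof.
move=> nf.
have d0 : (0 < \rank (cokermx M))%N.
  by rewrite mxrank_coker subn_gt0 ltn_neqAle rank_leq_col andbT.
have [c0 nz0 fix0] := dual_fix (factmod_repr modM) d0.
exists (in_factmod M 1%:M *m c0); split.
- apply: contraNneq nz0 => e.
  have := congr1 (mulmx (@val_factmod _ _ M _ 1%:M)) e.
  by rewrite mulmxA -in_factmodE val_factmodK mul1mx mulmx0 => ->.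
- rewrite mulmxA -in_factmodE.
  have /eqP -> : in_factmod M M == 0 by rewrite in_factmod_eq0.
  by rewrite mul0mx.
- move=> x Gx; rewrite mulmxA -in_factmodE -[rM x]mul1mx (in_factmodJ modM) //.
  by rewrite -mulmxA; have := fix0 x Gx => /= ->.
Qed.


Local Notation nG := (gcard G).
Local Notation aG := (regular_repr F G).

Definition triv_mx (x : gT) : 'M[F]_1 := 1%:M.
Lemma triv_mx_repr : mx_repr G triv_mx.
Proof. by split=> // x y _ _; rewrite /triv_mx mul1mx. Qed.
Definition triv_repr := MxRepresentation triv_mx_repr.

Definition ones : 'cV[F]_nG := const_mx 1.

Lemma fixcol (c : 'cV[F]_nG) : (forall x, x \in G -> aG x *m c = c) ->
  c = c (gring_index G 1%g) 0 *: ones.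
Proof.
move=> fc; apply/matrixP=> k j; rewrite ord1 !mxE mulr1.
have := congr1 (row (gring_index G 1%g)) (fc _ (enum_valP k)).
rewrite row_mul rowK gring_indexK // mul1g gring_valK -rowE => e.
by have := congr1 (fun r : 'rV_1 => r 0 0) e; rewrite !mxE => ->.
Qed.

Lemma aG_ones x : x \in G -> aG x *m ones = ones.
Proof.
move=> Gx; apply/row_matrixP=> i; rewrite row_mul rowK -rowE.
by apply/rowP=> j; rewrite !mxE.
Qed.

Lemma ones_neq0 : ones != 0.
Proof.
apply/eqP=> /matrixP/(_ (gring_index G 1%g) 0); rewrite !mxE => /eqP.
by rewrite oner_eq0.
Qed.

Lemma indec_rfix n (rM : mx_representation F G n) : (0 < n)%N ->
  (\rank (rfix_mx rM G) <= 1)%N -> mx_indecomposable rM.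
Proof.
move=> n0 r1; split=> // V W modV modW _ /mxdirect_addsP dx.
set R := rfix_mx rM G.
have key : forall (X : 'M_n) (modX : mxmodule rM X), X != 0 -> (R <= X)%MS.
  move=> X modX nzX.
  have : rfix_mx (submod_repr modX) G != 0.
    by apply: (rfix_pgroup_pchar pF) => //; rewrite lt0n mxrank_eq0.
  rewrite -mxrank_eq0 (rfix_submod modX) // mxrank_eq0 => nz.
  have nzA : (X :&: R)%MS != 0.
    by apply: contraNneq nz => ->; rewrite linear0.
  have sAR : ((X :&: R) <= R)%MS by apply: capmxSr.
  have : (R <= X :&: R)%MS.
    rewrite -(mxrank_leqif_sup sAR) eqn_leq mxrank_leqif_sup //=.
    by apply: leq_trans r1 _; rewrite lt0n mxrank_eq0.
  by move/submx_trans; apply; apply: capmxSl.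
apply/negPn/negP; rewrite negb_or => /andP[nV nW].
have RV := key V modV nV; have RW := key W modW nW.
have : (R <= V :&: W)%MS by rewrite sub_capmx RV.
rewrite dx submx0 => /eqP R0.
have : rfix_mx (submod_repr modV) G != 0.
  by apply: (rfix_pgroup_pchar pF) => //; rewrite lt0n mxrank_eq0.
rewrite -mxrank_eq0 (rfix_submod modV) // mxrank_eq0.
by rewrite -/R R0 capmx0 linear0 eqxx.
Qed.


Lemma core (U : 'M[F]_nG) (modU : mxmodule aG U) : U != 0 -> ~~ row_full U ->
  mx_indecomposable (submod_repr modU) /\ mx_projective_free (submod_repr modU).
Proof.
move=> nzU nfU; split.
  apply: indec_rfix; first by rewrite lt0n mxrank_eq0.
  rewrite (rfix_submod modU) //; apply: leq_trans (mxrankM_maxl _ _) _.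
  apply: leq_trans (mxrankS (capmxSr _ _)) _.
  by rewrite rfix_regular rank_leq_row.
move=> V W modV modW _ _ projV; apply/negPn/negP => nzV.
have d0 : (0 < \rank V)%N by rewrite lt0n mxrank_eq0.
have [c nzc fc] := dual_fix (submod_repr modV) d0.
have i1 : mx_intertwines aG triv_repr ones.
  by move=> x Gx; rewrite aG_ones // /= /triv_mx mulmx1.
have i2 : mx_intertwines (submod_repr modV) triv_repr c.
  by move=> x Gx; rewrite fc // /= /triv_mx mulmx1.
have rf : row_full ones.
  rewrite /row_full eqn_leq rank_leq_col lt0n mxrank_eq0; exact: ones_neq0.
have [h hint hpi] := projV _ _ aG triv_repr ones c i1 rf i2.
have modh : mxmodule aG <<h>>%MS.
  rewrite (eqmx_module _ (genmxE h)).
  by apply/mxmoduleP=> x Gx; rewrite -hint // submxMl.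
have fh : row_full h.
  apply/negPn/negP=> nfh.
  have nfh' : ~~ row_full <<h>>%MS by rewrite /row_full genmxE.
  have [c2 [nz2 h0' f2]] := dual_fix_quot _ _ _ modh nfh'.
  have h0 : h *m c2 = 0.
    have /submxP[D ->] : (h <= <<h>>)%MS by rewrite genmxE.
    by rewrite -mulmxA h0' mulmx0.
  move: (h0); rewrite (fixcol _ f2) -scalemxAr hpi => /eqP.
  rewrite scalemx_eq0 (negbTE nzc) orbF => /eqP s0.
  by move: nz2; rewrite (fixcol _ f2) s0 scale0r eqxx.
have : (nG <= \rank U)%N.
  apply: leq_trans (rank_leq_row V).
  move: fh => /eqP fh; rewrite -[X in (X <= _)%N]fh; exact: rank_leq_row.
by rewrite leqNgt ltn_neqAle rank_leq_col andbT nfU.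
Qed.

End Aux.

Theorem lemma3p3 (F : fieldType) (gT : finGroupType) (G : {group gT}) (p : nat) :
  (p.-group G)%g -> p \in [pchar F] ->
  (forall (U : 'M[F]_(gcard G)) (modU : mxmodule (regular_repr F G) U),
     gring_ideal U -> U != 0 -> ~~ row_full U ->
     mx_indecomposable (submod_repr modU) /\ mx_projective_free (submod_repr modU))
  /\
  (forall (i : nat) (U : 'M[F]_(gcard G)) (modU : mxmodule (regular_repr F G) U),
     (0 < i)%N ->
     (forall v : 'rV[F]_(gcard G), (v <= U)%MS <-> in_gring_rad_pow i v) ->
     U != 0 ->
     mx_indecomposable (submod_repr modU) /\ mx_projective_free (submod_repr modU)).
Proof.
move=> pG pF; split=> [U modU _ nz nf|i U modU i0 eU nz].
  exact: (@core _ _ _ _ pG pF U modU).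
apply: (@core _ _ _ _ pG pF U modU nz); apply/negP=> fU.
have : in_gring_rad_pow i (@gring_row F _ G 1%:M) by apply: (proj1 (eU (@gring_row F _ G 1%:M))); apply: submx_full.
case: i i0 {eU} => // i _ [m [a [b [hab e]]]].
have irr1 : mx_irreducible (triv_repr F gT G).
  by apply: mx_abs_irrW; apply: linear_mx_abs_irr.
have := congr1 (gring_mx (triv_repr F gT G)) e.
rewrite -gring_opE gring_op1 linear_sum big1 => [|k _].
  by move/matrixP/(_ 0 0); rewrite !mxE /= => /eqP; rewrite oner_eq0.
rewrite /gring_mul /= gring_mxA.
by have [_ /(_ _ _ irr1) ->] := hab k; rewrite mulmx0.
Qed.
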